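(* Let $\psi$ be a $\mathbf{\Sigma}$-piecewise linear function on $N_{\mathbb{R}}$. Then $\dim\Lambda_\psi<m$ if and only if there exist an index $k\in\{1,\dots,n\}$ and a constant $c\in\mathbb{R}$ such that $\langle\lambda,v_k\rangle=c$ for all $\lambda\in\Lambda_\psi$.
   Context: $N$ is a lattice of rank $m$, $M=\mathrm{Hom}(N,\mathbb{Z})$, $N_{\mathbb{R}}=N\otimes\mathbb{R}$, $M_{\mathbb{R}}=M\otimes\mathbb{R}$, with the natural pairing $\langle\cdot,\cdot\rangle$; $\Sigma$ is a complete simplicial fan in $N_{\mathbb{R}}$ with $n$ rays and $v_i\in N$ a nonzero lattice point on the $i$-th ray ($\mathbf{\Sigma}=(\Sigma,\{v_i\})$). A $\mathbf{\Sigma}$-piecewise linear function is a continuous $\psi:N_{\mathbb{R}}\to\mathbb{R}$ whose restriction to each cone of $\Sigma$ is linear; for each maximal cone $\sigma$, $\psi_\sigma\in M_{\mathbb{R}}$ is the linear function agreeing with $\psi$ on $\sigma$. $\Lambda_\psi\subset M_{\mathbb{R}}$ is the convex hull of $\{\psi_\sigma:\sigma\text{ a maximal cone of }\Sigma\}$. *)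

(* Defs.v *)
From HB Require Import structures.
From mathcomp Require Import all_boot all_order all_algebra.
Set Implicit Arguments. Unset Strict Implicit. Unset Printing Implicit Defensive.
Import Order.TTheory GRing.Theory Num.Theory.
Local Open Scope ring_scope.

(* N = Z^m (row vectors of ints), N_R = M_R = 'rV[R]_m, with R a real field.
   The pairing <u, x> between M_R and N_R is the standard dot product. *)

Definition pairing (R : realFieldType) (m : nat) (u x : 'rV[R]_m) : R :=
  \sum_(j < m) u 0 j * x 0 j.

Definition toNR (R : realFieldType) (m : nat) (v : 'rV[int]_m) : 'rV[R]_m :=
  map_mx (fun z : int => z%:~R) v.

Definition in_cone (R : realFieldType) (m n : nat) (v : 'I_n -> 'rV[R]_m)
  (S : {set 'I_n}) (x : 'rV[R]_m) : Prop :=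
  exists a : 'I_n -> R,
    (forall i, 0 <= a i) /\ (forall i, i \notin S -> a i = 0) /\
    x = \sum_(i < n) a i *: v i.

(* Sigma (a set of subsets of the n rays, each subset S standing for the cone
   generated by the v_i, i in S) is a complete simplicial fan whose rays are
   exactly the rays spanned by v_0, ..., v_(n-1). *)
Definition complete_simplicial_fan (R : realFieldType) (m n : nat)
  (v : 'I_n -> 'rV[R]_m) (Sigma : {set {set 'I_n}}) : Prop :=
  (forall i, [set i] \in Sigma) /\
  (forall S, S \in Sigma -> forall a : 'I_n -> R,
      (forall i, i \notin S -> a i = 0) ->
      \sum_(i < n) a i *: v i = 0 -> forall i, a i = 0) /\
  (forall S T : {set 'I_n}, S \in Sigma -> T \subset S -> T \in Sigma) /\
  (forall S T : {set 'I_n}, S \in Sigma -> T \in Sigma -> forall x,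
      in_cone v S x -> in_cone v T x -> in_cone v (S :&: T) x) /\
  (forall x, exists2 S, S \in Sigma & in_cone v S x).

Definition continuous_fun (R : realFieldType) (m : nat) (f : 'rV[R]_m -> R) :=
  forall (x : 'rV[R]_m) (e : R), 0 < e -> exists2 d : R, 0 < d &
    forall y : 'rV[R]_m, (forall j, `|y 0 j - x 0 j| < d) -> `|f y - f x| < e.

Definition agrees_on_cone (R : realFieldType) (m n : nat) (v : 'I_n -> 'rV[R]_m)
  (psi : 'rV[R]_m -> R) (S : {set 'I_n}) (u : 'rV[R]_m) : Prop :=
  forall x, in_cone v S x -> psi x = pairing u x.

Definition Sigma_PL (R : realFieldType) (m n : nat) (v : 'I_n -> 'rV[R]_m)
  (Sigma : {set {set 'I_n}}) (psi : 'rV[R]_m -> R) : Prop :=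
  continuous_fun psi /\
  forall S, S \in Sigma -> exists u, agrees_on_cone v psi S u.

Definition maximal_cone (n : nat) (Sigma : {set {set 'I_n}}) (S : {set 'I_n}) :=
  maxset [pred T : {set 'I_n} | T \in Sigma] S.

Definition Lambda (R : realFieldType) (m n : nat) (v : 'I_n -> 'rV[R]_m)
  (Sigma : {set {set 'I_n}}) (psi : 'rV[R]_m -> R) (l : 'rV[R]_m) : Prop :=
  exists (k : nat) (w : 'I_k -> R) (p : 'I_k -> 'rV[R]_m),
    (forall i, 0 <= w i) /\ \sum_(i < k) w i = 1 /\
    (forall i, exists2 S, maximal_cone Sigma S & agrees_on_cone v psi S (p i)) /\
    l = \sum_(i < k) w i *: p i.

Definition has_indep_diffs (R : realFieldType) (m : nat)
  (P : 'rV[R]_m -> Prop) (d : nat) : Prop :=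
  exists A : 'M[R]_(d, m), row_free A /\
    forall i, exists x y, P x /\ P y /\ row i A = x - y.

Definition affine_dim (R : realFieldType) (m : nat)
  (P : 'rV[R]_m -> Prop) (d : nat) : Prop :=
  has_indep_diffs P d /\ ~ has_indep_diffs P d.+1.

(* Main.v *)
Require Import Defs.
From HB Require Import structures.
From mathcomp Require Import all_boot all_order all_algebra.
From Stdlib Require Import Classical ClassicalEpsilon.
From mathcomp Require Import ring lra zify.
Set Implicit Arguments. Unset Strict Implicit. Unset Printing Implicit Defensive.
Import Order.TTheory GRing.Theory Num.Theory.
Local Open Scope ring_scope.

Section Basics.
Variables (R : realFieldType) (m n : nat).

Lemma pairingE (u x : 'rV[R]_m) : pairing u x = (u *m x^T) 0 0.
Proof. by rewrite /pairing !mxE; apply: eq_bigr => j _; rewrite !mxE. Qed.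

Lemma pairingDr (u x y : 'rV[R]_m) : pairing u (x + y) = pairing u x + pairing u y.
Proof. by rewrite /pairing -big_split; apply: eq_bigr => j _; rewrite mxE mulrDr. Qed.

Lemma pairingZr (u x : 'rV[R]_m) k : pairing u (k *: x) = k * pairing u x.
Proof. by rewrite /pairing mulr_sumr; apply: eq_bigr => j _; rewrite mxE mulrCA. Qed.

Lemma pairingBl (u x y : 'rV[R]_m) : pairing (x - y) u = pairing x u - pairing y u.
Proof. by rewrite /pairing -sumrB; apply: eq_bigr => j _; rewrite !mxE mulrBl. Qed.

Lemma pairing_suml k (w : 'I_k -> R) (p : 'I_k -> 'rV[R]_m) x :
  pairing (\sum_(i < k) w i *: p i) x = \sum_(i < k) w i * pairing (p i) x.
Proof.
rewrite pairingE mulmx_suml summxE; apply: eq_bigr => i _.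
by rewrite -scalemxAl mxE pairingE.
Qed.

Variable V : 'I_n -> 'rV[R]_m.
Definition supp (S : {set 'I_n}) (a : 'I_n -> R) := forall i, i \notin S -> a i = 0.
Definition comb (a : 'I_n -> R) := \sum_(i < n) a i *: V i.

Lemma comb_lin x y a b :
  comb (fun i => x * a i + y * b i) = x *: comb a + y *: comb b.
Proof.
rewrite /comb !scaler_sumr -big_split /=; apply: eq_bigr => i _.
by rewrite scalerDl !scalerA.
Qed.

Lemma in_coneE S x : in_cone V S x <->
  exists a, (forall i, 0 <= a i) /\ supp S a /\ x = comb a.
Proof. by []. Qed.

Lemma cone_add S x y : in_cone V S x -> in_cone V S y -> in_cone V S (x + y).
Proof.
move=> [a [a0 [aS ->]]] [b [b0 [bS ->]]].
exists (fun i => a i + b i); split; first by move=> i; rewrite addr_ge0.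
split; first by move=> i iS; rewrite aS // bS // addr0.
by rewrite -big_split; apply: eq_bigr => i _; rewrite scalerDl.
Qed.

Lemma cone_scale S k x : 0 <= k -> in_cone V S x -> in_cone V S (k *: x).
Proof.
move=> k0 [a [a0 [aS ->]]]; exists (fun i => k * a i); split.
  by move=> i; rewrite mulr_ge0.
split; first by move=> i iS; rewrite aS // mulr0.
by rewrite scaler_sumr; apply: eq_bigr => i _; rewrite scalerA.
Qed.

Lemma cone_gen (S : {set 'I_n}) i : i \in S -> in_cone V S (V i).
Proof.
move=> iS; exists (fun j => if j == i then 1 else 0); split.
  by move=> j; case: eqP.
split; first by move=> j jS; case: eqP => // ej; rewrite ej iS in jS.
rewrite (bigD1 i) //= eqxx scale1r big1 ?addr0 // => j /negbTE ->.
by rewrite scale0r.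
Qed.

Lemma cone_mono (S T : {set 'I_n}) x : S \subset T -> in_cone V S x -> in_cone V T x.
Proof.
move=> sST [a [a0 [aS ->]]]; exists a; split=> //; split=> // i iT.
by apply: aS; apply: contra iT; apply: (subsetP sST).
Qed.

Lemma cone_interval (S : {set 'I_n}) p q a b c : in_cone V S (p + a *: q) ->
  in_cone V S (p + b *: q) -> a <= c -> c <= b -> in_cone V S (p + c *: q).
Proof.
move=> Ha Hb ac cb.
have [eab|nab] := eqVneq a b.
  have ca : c = a by apply/eqP; rewrite eq_le ac andbT eab.
  by rewrite ca.
have lab : 0 < b - a by rewrite subr_gt0 lt_neqAle nab (le_trans ac cb).
set t := (c - a) / (b - a).
have t0 : 0 <= t by apply: divr_ge0; [rewrite subr_ge0 | apply: ltW].
have t1 : 0 <= 1 - t.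
  by rewrite subr_ge0 /t ler_pdivrMr // mul1r lerD2r.
have -> : p + c *: q = (1 - t) *: (p + a *: q) + t *: (p + b *: q).
  rewrite !scalerDr !scalerA addrACA -scalerDl subrK scale1r -scalerDl.
  congr (_ + _ *: _).
  rewrite /t; field; by rewrite gt_eqF.
by apply: cone_add; apply: cone_scale.
Qed.

End Basics.
Section Fan.
Variables (R : realFieldType) (m n : nat) (V : 'I_n -> 'rV[R]_m)
  (Sigma : {set {set 'I_n}}).
Hypothesis hF : complete_simplicial_fan V Sigma.


Lemma uniq_coef (S : {set 'I_n}) : S \in Sigma -> forall a b,
  supp S a -> supp S b -> comb V a = comb V b -> forall i, a i = b i.
Proof.
move=> SS a b aS bS eab i; apply/eqP; rewrite -subr_eq0; apply/eqP.
case: hF => _ [hs _]; apply: (hs S SS (fun i => a i - b i)).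
  by move=> j jS; rewrite aS // bS // subr0.
have -> : \sum_(j < n) (a j - b j) *: V j = comb V a - comb V b.
  by rewrite /comb -sumrB; apply: eq_bigr => j _; rewrite scalerBl.
by rewrite eab subrr.
Qed.

Lemma ltr_pdivrMr_helper (e0 : R) : 0 < e0 -> e0 / 2 < e0.
Proof. move=> h; lra. Qed.

Lemma comb_ext a b : (forall i, a i = b i) -> comb V a = comb V b.
Proof. by move=> h; apply: eq_bigr => i _; rewrite h. Qed.

Lemma lin2 (x y a b : R) (p q : 'rV[R]_m) :
  x *: (p + a *: q) + y *: (p + b *: q) = (x + y) *: p + (x * a + y * b) *: q.
Proof. by rewrite !scalerDr !scalerA addrACA -!scalerDl. Qed.

Lemma pos_affine (x y e0 : R) : 0 < e0 ->
  (forall e, 0 < e -> e <= e0 -> 0 <= x + e * y) -> 0 <= x.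
Proof.
move=> e0p H; rewrite leNgt; apply/negP => x0.
have h0 := H e0 e0p (lexx _).
have y0 : 0 < y.
  rewrite ltNge; apply/negP => y0.
  have : e0 * y <= 0 by rewrite pmulr_rle0.
  lra.
have hd : 0 < - x / (2 * y) by rewrite divr_gt0 ?mulr_gt0 ?oppr_gt0.
have hle : - x / (2 * y) <= e0.
  rewrite ler_pdivrMr ?mulr_gt0 //; nra.
have := H _ hd hle.
have -> : x + - x / (2 * y) * y = x / 2 by field; rewrite gt_eqF.
lra.
Qed.

Lemma closed_cone (S : {set 'I_n}) p q e0 : S \in Sigma -> 0 < e0 ->
  (forall e, 0 < e -> e <= e0 -> in_cone V S (p + e *: q)) ->
  in_cone V S p /\ exists d, supp S d /\ q = comb V d.
Proof.
move=> SS e0p H.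
have e02 : 0 < e0 / 2 by rewrite divr_gt0.
have [a [a0 [aS Ea]]] := H e0 e0p (lexx _).
have [b [b0 [bS Eb]]] := H (e0 / 2) e02 (ltW (ltr_pdivrMr_helper e0p)).
have {}Ea : comb V a = p + e0 *: q by rewrite Ea.
have {}Eb : comb V b = p + (e0 / 2) *: q by rewrite Eb.
pose d i := 2 / e0 * a i + - (2 / e0) * b i.
pose f i := -1 * a i + 2 * b i.
have dS : supp S d by move=> i iS; rewrite /d aS // bS // !mulr0 addr0.
have fS : supp S f by move=> i iS; rewrite /f aS // bS // !mulr0 addr0.
have e0n : e0 != 0 by rewrite gt_eqF.
have Ed : comb V d = q.
  rewrite comb_lin Ea Eb lin2 subrr scale0r add0r.
  have -> : 2 / e0 * e0 + - (2 / e0) * (e0 / 2) = 1 by field.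
  by rewrite scale1r.
have Ef : comb V f = p.
  rewrite comb_lin Ea Eb lin2.
  have -> : -1 + 2 = 1 :> R by lra.
  have -> : -1 * e0 + 2 * (e0 / 2) = 0 by field.
  by rewrite scale1r scale0r addr0.
split; last by exists d.
exists f; split=> //.
move=> i; apply: (pos_affine (y := d i) e0p) => e ep ee.
have [c [c0 [cS Ec]]] := H e ep ee.
have Ec' : comb V c = comb V (fun j => 1 * f j + e * d j).
  by rewrite comb_lin Ed Ef scale1r.
have fdS : supp S (fun j => 1 * f j + e * d j).
  by move=> j jS; rewrite fS // dS // !mulr0 addr0.
by have := uniq_coef SS cS fdS Ec' i; rewrite mul1r => <-.
Qed.
Lemma local_cone p q : exists2 T, T \in Sigma & exists e0, 0 < e0 /\
  forall e, 0 < e -> e <= e0 -> in_cone V T (p + e *: q).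
Proof.
pose K T e := in_cone V T (p + e *: q).
pose good T := exists e0, 0 < e0 /\ forall e, 0 < e -> e <= e0 -> K T e.
pose bad T := exists eT, 0 < eT /\ forall e, 0 < e -> e < eT -> ~ K T e.
have gb T : good T \/ bad T.
  have [[e' [e'p Ke']]|nK] := classic (exists e', 0 < e' /\ K T e').
    have [bT|nbT] := classic (bad T); first by right.
    left; exists e'; split=> // e ep ee'.
    apply: NNPP => nKe; apply: nbT; exists e; split=> // e'' e''p e''e Ke''.
    apply: nKe; apply: (cone_interval Ke'' Ke') => //; exact: ltW.
  right; exists 1; split=> // e ep _ Ke; apply: nK; by exists e.
have avoid (s : seq {set 'I_n}) : (forall T, T \in s -> bad T) ->
    exists e, 0 < e /\ forall T, T \in s -> forall e', 0 < e' -> e' < e -> ~ K T e'.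
  elim: s => [|T s IH] H.
    by exists 1; split.
  have [e1 [e1p H1]] : exists e, 0 < e /\ forall T, T \in s -> forall e', 0 < e' -> e' < e -> ~ K T e'.
    by apply: IH => T' h; apply: H; rewrite inE h orbT.
  have [eT [eTp HT]] := H T (mem_head _ _).
  exists (Num.min e1 eT); split; first by rewrite lt_min e1p eTp.
  move=> T'; rewrite inE => /orP [/eqP -> | T's] e' e'p; rewrite lt_min => /andP [h1 h2].
    exact: HT.
  exact: H1.
apply: NNPP => nT.
have hb : forall T, T \in enum Sigma -> bad T.
  move=> T; rewrite mem_enum => TS.
  have [g|//] := gb T.
  by exfalso; apply: nT; exists T.
have [e [ep He]] := avoid _ hb.
case: hF => _ [_ [_ [_ hc]]].
have [S SS KS] := hc (p + (e / 2) *: q).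
apply: (He S _ (e / 2)) => //; first by rewrite mem_enum.
  by rewrite divr_gt0.
exact: ltr_pdivrMr_helper.
Qed.

Lemma maximal_in S : maximal_cone Sigma S -> S \in Sigma.
Proof. by case/maxsetP. Qed.

Lemma indicator_cone (S : {set 'I_n}) :
  in_cone V S (comb V (fun i => if i \in S then 1 else 0)).
Proof.
exists (fun i => if i \in S then 1 else 0); split; first by move=> i; case: ifP.
by split=> // i /negbTE ->.
Qed.

Lemma maximal_span S : maximal_cone Sigma S ->
  forall y, exists b, supp S b /\ y = comb V b.
Proof.
move=> hS y; have SS := maximal_in hS.
apply: NNPP => ny.
pose ind i := if i \in S then 1 else 0 : R.
have [T TS [e0 [e0p HT]]] := local_cone (comb V ind) y.
have [xT [d [dT Ed]]] := closed_cone TS e0p HT.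
case: (hF) => _ [_ [_ [hi _]]].
have [c [c0 [cST Ec]]] := hi S T SS TS _ (indicator_cone S) xT.
have sub : S \subset T.
  apply/subsetP => i iS.
  have cS : supp S c.
    by move=> j jS; apply: cST; rewrite inE negb_and jS.
  have indS : supp S ind by move=> j /negbTE jS; rewrite /ind jS.
  have := uniq_coef SS cS indS (esym Ec) i; rewrite /ind iS => ci.
  apply: contraT => iT; have := cST i; rewrite inE (negbTE iT) andbF => /(_ isT).
  rewrite ci => /eqP; by rewrite oner_eq0.
have [_ hmax] := maxsetP hS.
have TeS := hmax T TS sub.
by apply: ny; exists d; rewrite -TeS.
Qed.

Lemma in_maximal x : exists2 S, maximal_cone Sigma S & in_cone V S x.
Proof.
case: (hF) => _ [_ [_ [_ hc]]].
have [T TS xT] := hc x.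
case: (maxset_exists (P := [pred T : {set 'I_n} | T \in Sigma]) (C := T) TS) => S hS TsS.
by exists S => //; apply: cone_mono TsS xT.
Qed.

Definition coord (S : {set 'I_n}) (y : 'rV[R]_m) : 'I_n -> R :=
  epsilon (inhabits (fun _ => 0)) (fun b => supp S b /\ y = comb V b).

Lemma coordP S y : maximal_cone Sigma S -> supp S (coord S y) /\ y = comb V (coord S y).
Proof.
move=> hS; rewrite /coord.
exact: (epsilon_spec (inhabits (fun _ => 0)) (fun b => supp S b /\ y = comb V b) (maximal_span hS y)).
Qed.

Lemma coord_lin S z w s i : maximal_cone Sigma S ->
  coord S (z + s *: w) i = coord S z i + s * coord S w i.
Proof.
move=> hS.
have [h1 e1] := coordP (z + s *: w) hS.
have [h2 e2] := coordP z hS.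
have [h3 e3] := coordP w hS.
have h4 : supp S (fun j => 1 * coord S z j + s * coord S w j).
  by move=> j jS; rewrite h2 // h3 // !mulr0 addr0.
have := uniq_coef (maximal_in hS) h1 h4 _ i; rewrite mul1r; apply.
by rewrite comb_lin -e1 -e2 -e3 scale1r.
Qed.

Lemma coord_cone S y i : maximal_cone Sigma S -> in_cone V S y -> 0 <= coord S y i.
Proof.
move=> hS [c [c0 [cS Ec]]].
have [h1 e1] := coordP y hS.
by rewrite -(uniq_coef (maximal_in hS) cS h1 _ i) // -e1.
Qed.

Lemma cone_of_coord S y : maximal_cone Sigma S ->
  (forall i, i \in S -> 0 <= coord S y i) -> in_cone V S y.
Proof.
move=> hS H; have [h1 e1] := coordP y hS.
exists (coord S y); split; last by split.
by move=> i; case: (boolP (i \in S)) => [/H //|/h1 ->].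
Qed.

Lemma count_lt (T : eqType) (P Q : pred T) (s : seq T) x :
  subpred P Q -> x \in s -> Q x -> ~~ P x -> (count P s < count Q s)%N.
Proof.
move=> sPQ; elim: s => [//|y s IH]; rewrite inE => /orP [/eqP <-|xs] Qx nPx /=.
  have := sub_count sPQ s; rewrite (negbTE nPx) Qx /=; lia.
have h := IH xs Qx nPx.
have : (P y <= Q y)%N by case: (P y) (sPQ y) => // /(_ isT) ->.
lia.
Qed.

Variable psi : 'rV[R]_m -> R.
Hypothesis hPL : forall S, S \in Sigma -> exists u, agrees_on_cone V psi S u.

Lemma segment z w c0 :
  (forall S u, maximal_cone Sigma S -> agrees_on_cone V psi S u -> pairing u w = c0) ->
  forall s, 0 <= s -> psi (z + s *: w) = psi z + s * c0.
Proof.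
move=> Hw.
pose Phi a := psi (z + a *: w) - a * c0.
pose B := [seq - coord X z i / coord X w i |
             X <- enum [set X : {set 'I_n} | maximal_cone Sigma X], i <- enum 'I_n].
pose Pab (a b : R) := fun t => (a < t) && (t < b).
have base a b : a < b -> ~~ has (Pab a b) B -> Phi a = Phi b.
  move=> ab nh.
  pose mid := (a + b) / 2.
  have am : a < mid by rewrite /mid; lra.
  have mb : mid < b by rewrite /mid; lra.
  have [M hM Mmid] := in_maximal (z + mid *: w).
  have hin t : a <= t -> t <= b -> in_cone V M (z + t *: w).
    move=> hat tb; apply: cone_of_coord => // i iM.
    rewrite coord_lin //.
    have hm := coord_cone i hM Mmid; rewrite coord_lin // in hm.
    set P := coord M z i in hm *; set Q := coord M w i in hm *.
    rewrite leNgt; apply/negP => neg.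
    have Qn : Q != 0 by apply/eqP => Q0; move: neg hm; rewrite Q0 mulr0 addr0; lra.
    pose r := - P / Q.
    have rQ : r * Q = - P by rewrite /r mulfVK.
    have rB : r \in B.
      apply: (allpairs_f (fun X i => - coord X z i / coord X w i)); rewrite mem_enum //.
      by rewrite inE.
    have h1 : (t - r) * Q < 0 by rewrite mulrBl rQ; lra.
    have h2 : 0 <= (mid - r) * Q by rewrite mulrBl rQ; lra.
    apply: (negP nh); apply/hasP; exists r => //; rewrite /Pab.
    have [Qp|Qneg] := ltP 0 Q.
      have [h3 h4] : t < r /\ r <= mid by split; nra.
      apply/andP; split; lra.
    have Qneg' : Q < 0 by rewrite lt_neqAle Qn Qneg.
    have [h3 h4] : r < t /\ mid <= r by split; nra.
    apply/andP; split; lra.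
  have [u hu] := hPL (maximal_in hM).
  have Ht t : a <= t -> t <= b -> Phi t = pairing u z.
    move=> hat tb; rewrite /Phi (hu _ (hin t hat tb)) pairingDr pairingZr.
    by rewrite (Hw M u hM hu) addrK.
  by rewrite Ht ?lexx ?(ltW ab) // Ht ?lexx ?(ltW ab).
have main N : forall a b, (count (Pab a b) B <= N)%N -> a <= b -> Phi a = Phi b.
  elim: N => [|N IH] a b hc ab.
    have [->//|nab] := eqVneq a b.
    apply: base; first by rewrite lt_neqAle nab.
    by rewrite has_count -leqNgt.
  have [->//|nab] := eqVneq a b.
  have ltab : a < b by rewrite lt_neqAle nab.
  have [/hasP [t tB /andP [hat tb]]|nh] := boolP (has (Pab a b) B); last exact: base.
  have c1 : (count (Pab a t) B < count (Pab a b) B)%N.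
    apply: (count_lt (x := t)) => //.
    - by move=> x /andP [h1 h2]; rewrite /Pab h1 /= (lt_trans h2 tb).
    - by rewrite /Pab hat tb.
    - by rewrite /Pab ltxx andbF.
  have c2 : (count (Pab t b) B < count (Pab a b) B)%N.
    apply: (count_lt (x := t)) => //.
    - by move=> x /andP [h1 h2]; rewrite /Pab h2 andbT (lt_trans hat h1).
    - by rewrite /Pab hat tb.
    - by rewrite /Pab ltxx.
  rewrite (IH a t) ?(ltW hat) //; last by rewrite -ltnS (leq_trans c1).
  by apply: IH; [rewrite -ltnS (leq_trans c2) | exact: ltW].
move=> s s0.
have := main (size B) 0 s (count_size _ _) s0.
by rewrite /Phi scale0r addr0 mul0r subr0 => ->; rewrite subrK.
Qed.

Lemma maximal_above T x : T \in Sigma -> in_cone V T x ->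
  exists2 M, maximal_cone Sigma M & T \subset M.
Proof.
move=> TS _.
case: (maxset_exists (P := [pred T : {set 'I_n} | T \in Sigma]) (C := T) TS) => M hM TM.
by exists M.
Qed.

Lemma support_in (S T : {set 'I_n}) a x k : S \in Sigma -> T \in Sigma ->
  (forall i, 0 <= a i) -> supp S a -> x = comb V a -> in_cone V T x -> a k != 0 ->
  k \in T.
Proof.
move=> SS TS a0 aS Ex xT ak.
case: (hF) => _ [_ [_ [hi _]]].
have [c [c0 [cST Ec]]] := hi S T SS TS x (ex_intro _ a (conj a0 (conj aS Ex))) xT.
have cS : supp S c by move=> j jS; apply: cST; rewrite inE negb_and jS.
have E : comb V c = comb V a by rewrite -Ex Ec.
have ck := uniq_coef SS cS aS E k.
apply: contraT => kT; have := cST k; rewrite inE (negbTE kT) andbF => /(_ isT).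
by rewrite ck => /eqP; rewrite (negbTE ak).
Qed.

Lemma find_ray w c0 : w != 0 ->
  (forall S u, maximal_cone Sigma S -> agrees_on_cone V psi S u -> pairing u w = c0) ->
  exists k, forall S u, maximal_cone Sigma S -> agrees_on_cone V psi S u ->
    pairing u (V k) = psi (V k).
Proof.
move=> w0 Hw.
case: (hF) => _ [_ [_ [_ hc]]].
have [tau tauS [a [a0 [aS Ea]]]] := hc w.
have [k ak] : exists k, a k != 0.
  apply: NNPP => h; move/eqP: w0; apply; rewrite Ea big1 // => i _.
  have -> : a i = 0 by apply/eqP; apply: contraT => hi; exfalso; apply: h; exists i.
  by rewrite scale0r.
exists k => S u hS hu.
pose z := comb V (fun i => if i \in S then 1 else 0).
have zS : in_cone V S z := indicator_cone S.
have [bk [bkS Ebk]] := maximal_span hS (V k).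
pose Sb := \sum_(i < n) `|bk i|.
have Sb0 : 0 <= Sb by apply: sumr_ge0 => i _.
pose d := 1 / (1 + Sb).
have d0 : 0 < d by rewrite /d divr_gt0 // ltr_wpDr.
have dS : d * (1 + Sb) = 1 by rewrite /d mulrC mulrA mulr1 mulfV // gt_eqF // ltr_wpDr.
have zdS : in_cone V S (z + d *: V k).
  exists (fun i => 1 * (if i \in S then 1 else 0) + d * bk i); split; last split.
  - move=> i; case: ifP => iS; last by rewrite bkS ?iS // mulr0 mulr0 addr0.
    have hb : - Sb <= bk i.
      have : `|bk i| <= Sb.
        by rewrite /Sb (bigD1 i) //= lerDl sumr_ge0.
      have := ler_norm (- bk i); rewrite normrN; lra.
    rewrite mulr1; nra.
  - by move=> i iS; rewrite (negbTE iS) bkS // !mulr0 addr0.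
  - by rewrite -/(comb V _) comb_lin scale1r -Ebk.
have [T TS [e1 [e1p HT]]] := local_cone w z.
have [wT _] := closed_cone TS e1p HT.
have [M hM TM] := maximal_above TS wT.
have wM := cone_mono TM wT.
have kM : k \in M := support_in tauS (maximal_in hM) a0 aS Ea wM ak.
set s := 1 / e1.
have Ezs : s *: (w + e1 *: z) = z + s *: w.
  have se : s * e1 = 1 by rewrite /s; field; rewrite gt_eqF.
  by rewrite scalerDr scalerA se scale1r addrC.
have P1 : in_cone V M (z + s *: w).
  have s0 : 0 <= s by apply: divr_ge0 => //; apply: ltW.
  rewrite -Ezs; apply: cone_scale => //.
  exact: cone_mono TM (HT e1 e1p (lexx _)).
have P2 : in_cone V M ((z + d *: V k) + s *: w).
  rewrite addrAC; apply: cone_add => //; apply: cone_scale; first exact: ltW.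
  exact: cone_gen.
have [u' hu'] := hPL (maximal_in hM).
have s0 : 0 <= s by apply: divr_ge0 => //; apply: ltW.
have E1 := segment z Hw s0.
have E2 := segment (z + d *: V k) Hw s0.
rewrite (hu _ zdS) pairingDr pairingZr in E2.
rewrite (hu _ zS) in E1.
rewrite (hu' _ P2) addrAC pairingDr pairingZr -(hu' _ P1) E1 in E2.
rewrite -(hu' _ (cone_gen V kM)) in E2.
have : d * pairing u (V k) = d * psi (V k) by move: E2; lra.
by move/(mulfI (lt0r_neq0 d0)).
Qed.

End Fan.
Section LinAlg.
Variables (R : realFieldType) (m : nat).

Lemma max_exists (P : nat -> Prop) B : P 0%N -> (forall d, P d -> (d < B)%N) ->
  exists2 d, P d & ~ P d.+1.
Proof.
move=> P0 hB; apply: NNPP => h.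
have step d : P d -> P d.+1.
  move=> Pd; apply: NNPP => nP; apply: h; by exists d.
have : forall k, P k by elim=> // k /step.
by move/(_ B)/hB; rewrite ltnn.
Qed.

Lemma diffs_bound (P : 'rV[R]_m -> Prop) (u : 'rV[R]_m) c : u != 0 ->
  (forall l, P l -> pairing l u = c) -> forall d, has_indep_diffs P d -> (d < m)%N.
Proof.
move=> u0 Hu d [A [fA hA]].
have AuT : A *m u^T = 0.
  apply/row_matrixP => i; rewrite row_mul row0.
  have [x [y [Px [Py ->]]]] := hA i.
  apply/matrixP => a b; rewrite !ord1 [RHS]mxE -pairingE pairingBl !Hu //.
  by rewrite subrr.
have uK : (u <= kermx A^T)%MS.
  rewrite sub_kermx.
  have -> : u *m A^T = (A *m u^T)^T by rewrite trmx_mul trmxK.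
  by rewrite AuT trmx0.
have := mxrankS uK; rewrite mxrank_ker mxrank_tr (eqP fA).
have : \rank u != 0%N by rewrite mxrank_eq0.
lia.
Qed.

Lemma diffs_normal (P : 'rV[R]_m -> Prop) d : affine_dim P d -> (d < m)%N ->
  exists w : 'rV[R]_m, w != 0 /\ forall x y, P x -> P y -> pairing (x - y) w = 0.
Proof.
move=> [[A [fA hA]] nh] dm.
have sub x y : P x -> P y -> (x - y <= A)%MS.
  move=> Px Py; apply: contraT => nsub; exfalso; apply: nh.
  have hexists : has_indep_diffs P (1 + d)%N.
    exists (col_mx (x - y) A); split.
      have hle := rank_leq_row (col_mx (x - y) A).
      have hlt : (A < col_mx (x - y) A)%MS.
        rewrite ltmxE; apply/andP; split.
          by rewrite -addsmxE addsmxSr.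
        apply: contra nsub => h; apply: submx_trans h.
        by rewrite -addsmxE addsmxSl.
      move: hlt; rewrite ltmxErank => /andP [_]; rewrite (eqP fA) => hlt.
      by rewrite /row_free eqn_leq hle hlt.
    move=> i; case: (split_ordP i) => j ->.
      by rewrite rowKu; exists x, y; split=> //; split=> //; apply/rowP => k; rewrite !mxE ord1.
    by rewrite rowKd; apply: hA.
  exact: hexists.
pose K := kermx A^T.
have [i Ki] : exists i, row i K != 0.
  apply: NNPP => h.
  have K0 : K = 0.
    apply/row_matrixP => i; rewrite row0; apply/eqP; apply: contraT => hi.
    by exfalso; apply: h; exists i.
  have := mxrank_ker A^T; rewrite -/K K0 mxrank0 mxrank_tr (eqP fA).
  lia.
exists (row i K); split=> // x y Px Py.
have wA : row i K *m A^T = 0 by apply/eqP; rewrite -sub_kermx row_sub.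
have [D ED] := submxP (sub x y Px Py).
rewrite pairingE ED -mulmxA.
have -> : A *m (row i K)^T = 0.
  have -> : A *m (row i K)^T = (row i K *m A^T)^T by rewrite trmx_mul trmxK.
  by rewrite wA trmx0.
by rewrite mulmx0 mxE.
Qed.

End LinAlg.
Lemma Lambda_single (R : realFieldType) (m n : nat) (V : 'I_n -> 'rV[R]_m)
  (Sigma : {set {set 'I_n}}) (psi : 'rV[R]_m -> R) S u :
  maximal_cone Sigma S -> agrees_on_cone V psi S u -> Lambda V Sigma psi u.
Proof.
move=> hS hu; exists 1%N, (fun _ => 1), (fun _ => u); split; first by move=> i.
split; first by rewrite big_ord1.
split; first by move=> i; exists S.
by rewrite big_ord1 scale1r.
Qed.

Theorem proposition3p8 (R : realFieldType) (m n : nat)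
  (v : 'I_n -> 'rV[int]_m) (Sigma : {set {set 'I_n}})
  (hSigma : complete_simplicial_fan (fun i => toNR R (v i)) Sigma)
  (psi : 'rV[R]_m -> R)
  (hpsi : Sigma_PL (fun i => toNR R (v i)) Sigma psi) :
  (exists2 d : nat, affine_dim (Lambda (fun i => toNR R (v i)) Sigma psi) d
                    & (d < m)%N)
  <->
  (exists (k : 'I_n) (c : R), forall l : 'rV[R]_m,
      Lambda (fun i => toNR R (v i)) Sigma psi l ->
      pairing l (toNR R (v k)) = c).
Proof.
set V := fun i => toNR R (v i).
have hPL := hpsi.2.
split.
  move=> [d hd dm].
  have [w [w0 hw]] := diffs_normal hd dm.
  have [M hM _] := in_maximal hSigma 0.
  have [u0 hu0] := hPL M (maximal_in hM).
  have Hw : forall S u, maximal_cone Sigma S -> agrees_on_cone V psi S u ->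
      pairing u w = pairing u0 w.
    move=> S u hS hu; apply/eqP; rewrite -subr_eq0 -pairingBl; apply/eqP.
    by apply: hw; [apply: (Lambda_single hS hu) | apply: (Lambda_single hM hu0)].
  have [k hk] := find_ray hSigma hPL w0 Hw.
  exists k, (psi (V k)) => l [kk [wt [p [wt0 [wt1 [hp ->]]]]]].
  rewrite pairing_suml.
  rewrite (eq_bigr (fun i => wt i * psi (V k))); last first.
    by move=> i _; have [S hS hpS] := hp i; rewrite (hk S (p i) hS hpS).
  by rewrite -mulr_suml wt1 mul1r.
move=> [k [c hc]].
have vk0 : V k != 0.
  case: hSigma => hr [hs _]; apply/eqP => vk.
  have := hs [set k] (hr k) (fun i => if i == k then 1 else 0).
  have h1 : forall i, i \notin [set k] -> (if i == k then 1 else 0) = 0 :> R.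
    by move=> i; rewrite inE; case: eqP.
  have h2 : \sum_(i < n) (if i == k then 1 else 0) *: V i = 0.
    rewrite (bigD1 k) //= eqxx scale1r vk add0r big1 // => j /negbTE ->.
    by rewrite scale0r.
  move=> /(_ h1 h2 k); rewrite eqxx => /eqP; by rewrite oner_eq0.
have bound := diffs_bound vk0 hc.
have P0 : has_indep_diffs (Lambda V Sigma psi) 0.
  exists 0; split; first by rewrite /row_free mxrank0.
  by case.
have [d hd nhd] := max_exists P0 bound.
exists d; first by split.
exact: bound hd.
Qed.
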